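(* Let $m=2$ and $n>4$. Let $\mathcal{C}$ be the class of all complete acyclic binary tree CP-nets over $n$ variables, over $\mathcal{X}_{swap}$. (1) If $|F^1(x)\cap L|\le n-4$ for every $x\in\mathcal{X}_{swap}$, then $\mathcal{C}$ is learnable with membership queries to a limited oracle. (2) If $|F^1(x)\cap L|\le\lfloor\frac{n-1}{2}\rfloor-2$ for every $x\in\mathcal{X}_{swap}$, then $\mathcal{C}$ is learnable with membership queries to a malicious oracle. In either case, the worst-case number of queries is in $O(n^2+e_{N^*}n\log_2(n))$, where $e_{N^*}$ is the number of edges of the target CP-net $N^*$.
   Context: Variables $V=\{v_1,\dots,v_n\}$ with binary domains. An outcome assigns a value to every variable. A complete CP-net gives each $v_i$ a parent set $Pa(v_i)\subseteq V\setminus\{v_i\}$ and, for each assignment to $Pa(v_i)$, a strict order on $D_{v_i}$; parents are non-dummy. A tree CP-net is acyclic (parent graph with edges $(v_j,v_i)$, $v_j\in Pa(v_i)$, has no cycle) with every $|Pa(v_i)|\le 1$. Improving flip: changing only $v_i$ to the value preferred under the order for context $o[Pa(v_i)]$; $o'\succ o$ iff a nonempty sequence of improving flips leads from $o$ to $o'$. A swap is an ordered pair $x=(x.1,x.2)$ of outcomes differing in exactly one variable $V(x)$; $\mathcal{X}_{swap}$ contains exactly one ordering of each such pair (fixed arbitrarily); the target concept is $c^*(x)=1$ iff $x.1\succ x.2$ under the target $N^*$. $F^1(x)$ is the set of swaps $x'\in\mathcal{X}_{swap}$ with $V(x')=V(x)$ whose outcomes differ from those of $x$ in exactly one variable other than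 $V(x)$. A set $L\subseteq\mathcal{X}_{swap}$ is fixed in advance by an adversary and unknown to the learner. A limited oracle answers $c^*(x)$ for $x\notin L$ and ''I don't know'' for $x\in L$; a malicious oracle answers $c^*(x)$ for $x\notin L$ and $1-c^*(x)$ for $x\in L$; both are persistent. A class is learnable with membership queries to a limited (malicious) oracle if some algorithm exactly identifies every target using a number of queries polynomial in $n$, the target's size (number of CPT statements) and $|L|$. *)

(* Defs.v *)
From mathcomp Require Import all_boot.
Set Implicit Arguments. Unset Strict Implicit. Unset Printing Implicit Defensive.

Definition outcome (n : nat) := {ffun 'I_n -> bool}.

Definition flip n (o : outcome n) (i : 'I_n) : outcome n :=
  [ffun j => if j == i then ~~ o j else o j].

(* A (complete, binary) CP-net in which every variable has at most one parent:
   pa i = Some p means Pa(v_i) = {v_p}, pa i = None means Pa(v_i) = {}.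
   cpt i b = preferred value of v_i when its parent has value b
   (for a parentless variable only cpt i false is used). *)
Record cpnet (n : nat) := CPNet {
  pa  : 'I_n -> option 'I_n ;
  cpt : 'I_n -> bool -> bool }.

Definition par_rel n (N : cpnet n) : rel 'I_n := fun j i => pa N i == Some j.

(* tree CP-net: acyclic parent graph, |Pa| <= 1 (built in), non-dummy parents,
   complete (built in: cpt is total). *)
Definition tree_cpnet n (N : cpnet n) : Prop :=
  (forall i j : 'I_n, par_rel N j i -> ~~ connect (par_rel N) i j) /\
  (forall i p : 'I_n, pa N i = Some p -> cpt N i false != cpt N i true).

Definition nedges n (N : cpnet n) : nat := #|[pred i : 'I_n | pa N i != None]|.

Definition pref n (N : cpnet n) (o : outcome n) (i : 'I_n) : bool :=
  match pa N i with Some p => cpt N i (o p) | None => cpt N i false end.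

Definition impflip n (N : cpnet n) : rel (outcome n) := fun o o' =>
  [exists i, (o' == flip o i) && (o' i == pref N o i)].

(* dom N a b  <->  a ≻ b : a nonempty sequence of improving flips leads from b to a *)
Definition dom n (N : cpnet n) (a b : outcome n) : bool :=
  [exists o1, impflip N b o1 && connect (impflip N) o1 a].

(* A swap is encoded by (x.1, V(x)); its second outcome is flip x.1 V(x). *)
Definition swap n := (outcome n * 'I_n)%type.

(* X_swap is given by an orientation: (o,i) \in X_swap iff ori o i; exactly one
   ordering of each pair is chosen. *)
Definition orientation_ok n (ori : outcome n -> 'I_n -> bool) : Prop :=
  forall o i, ori (flip o i) i = ~~ ori o i.

Definition in_Xswap n (ori : outcome n -> 'I_n -> bool) (x : swap n) : bool :=
  ori x.1 x.2.

Definition concept n (N : cpnet n) (x : swap n) : bool := dom N x.1 (flip x.1 x.2).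

Definition F1 n (ori : outcome n -> 'I_n -> bool) (x : swap n) : {set swap n} :=
  [set y : swap n | [&& in_Xswap ori y, y.2 == x.2 &
     #|[pred j : 'I_n | (j != x.2) && (y.1 j != x.1 j)]| == 1]].

(* Learning algorithms with membership queries: decision trees whose inner
   nodes ask a query and branch on the answer (of type A). *)
Inductive alg (n : nat) (A : Type) :=
| Ret of cpnet n
| Ask of swap n & (A -> alg n A).

(* Run an algorithm against a (persistent) oracle; returns the output and the
   number of queries asked. Asking a query outside X_swap is a failure. *)
Fixpoint run n A (ori : outcome n -> 'I_n -> bool) (a : alg n A)
    (orc : swap n -> A) : option (cpnet n * nat) :=
  match a with
  | Ret h => Some (h, 0)
  | Ask x k => if in_Xswap ori x
               then omap (fun p => (p.1, p.2.+1)) (run ori (k (orc x)) orc)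
               else None
  end.

(* limited oracle: "I don't know" (None) on L *)
Definition limited_oracle n (N : cpnet n) (L : {set swap n}) (x : swap n)
  : option bool := if x \in L then None else Some (concept N x).

Definition malicious_oracle n (N : cpnet n) (L : {set swap n}) (x : swap n)
  : bool := if x \in L then ~~ concept N x else concept N x.

Definition learns n A (ori : outcome n -> 'I_n -> bool) (a : alg n A)
    (orc : swap n -> A) (N : cpnet n) (bound : nat) : Prop :=
  exists h q, run ori a orc = Some (h, q) /\ tree_cpnet h /\
    (forall x, in_Xswap ori x -> concept h x = concept N x) /\ q <= bound.

(* Main.v *)
Require Import Defs.
From mathcomp Require Import all_boot.
From mathcomp Require Import zify.
Set Implicit Arguments. Unset Strict Implicit. Unset Printing Implicit Defensive.

Lemma cntE (T: finType) (P : pred T) : count P (enum T) = #|P|.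
Proof. rewrite -size_filter cardE /enum_mem -filter_predI; congr size; apply: eq_filter => x /=. by rewrite andbT. Qed.

Lemma flip_same n (o : outcome n) i : flip o i i = ~~ o i.
Proof. by rewrite /flip ffunE eqxx. Qed.
Lemma flip_other n (o : outcome n) i j : j != i -> flip o i j = o j.
Proof. by rewrite /flip ffunE => /negbTE ->. Qed.
Lemma flipK n (o : outcome n) i : flip (flip o i) i = o.
Proof. apply/ffunP => j; rewrite /flip !ffunE; case: eqP => _ //; apply: negbK. Qed.

Section Theory.
Variables (n : nat) (N : cpnet n).
Hypothesis hN : tree_cpnet N.

Lemma pa_neq i : pa N i != Some i.
Proof.
apply/negP => /eqP h. case: hN => h1 _.
by have := h1 i i (introT eqP h); rewrite connect0.
Qed.

Lemma pref_flip o i j : pa N i != Some j -> pref N (flip o j) i = pref N o i.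
Proof.
rewrite /pref; case: (pa N i) => [p|] // hp.
rewrite flip_other //; apply: contra hp => /eqP ->; done.
Qed.

Lemma pref_flip_self o i : pref N (flip o i) i = pref N o i.
Proof. exact: pref_flip (pa_neq i). Qed.

Definition dep (i : 'I_n) := #|[pred j | connect (par_rel N) j i]|.

Lemma dep_lt i p : pa N i = Some p -> dep p < dep i.
Proof.
move=> hp; apply: proper_card; apply/properP; split.
  apply/subsetP => j; rewrite !inE => hj.
  apply: connect_trans hj (connect1 _); rewrite /par_rel hp.
  done.
exists i; first by rewrite inE connect0.
rewrite inE; case: hN => h1 _; apply: h1; by rewrite /par_rel hp.
Qed.

Lemma dep_le i : dep i <= n.
Proof. by rewrite /dep; apply: leq_trans (max_card _) _; rewrite card_ord. Qed.

Definition Phi (o : outcome n) :=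
  \sum_(v : 'I_n) (o v == pref N o v) * (n.+1) ^ (n.+1 - dep v).

Lemma Phi_lt o o' : impflip N o o' -> Phi o < Phi o'.
Proof.
move=> /existsP [v /andP [/eqP eo' hv]].
have hov : (o v == pref N o v) = false.
  by move: hv; rewrite eo' flip_same; case: (o v); case: (pref N o v).
have hv' : (o' v == pref N o' v) = true.
  by rewrite {2}eo' pref_flip_self.
rewrite /Phi [X in X < _](bigD1 v) // [X in _ < X](bigD1 v) //= hov hv' mul0n add0n mul1n.
rewrite (bigID (fun u => pa N u == Some v)) /=.
rewrite [X in _ < _ + X](bigID (fun u => pa N u == Some v)) /=.
have -> : \sum_(i | (i != v) && (pa N i != Some v))
      (o i == pref N o i) * n.+1 ^ (n.+1 - dep i) =
    \sum_(i | (i != v) && (pa N i != Some v))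
      (o' i == pref N o' i) * n.+1 ^ (n.+1 - dep i).
  apply: eq_bigr => u /andP [hu hpu].
  by rewrite eo' flip_other // pref_flip.
set S := \sum_(i | _ && (pa N i != Some v)) _.
apply: (@leq_trans (n.+1 ^ (n.+1 - dep v) + S)); last first.
  by rewrite leq_add2l leq_addl.
rewrite ltn_add2r.
apply: (@leq_ltn_trans (\sum_(i | (i != v) && (pa N i == Some v)) n.+1 ^ (n.+1 - dep v).-1)).
  apply: leq_sum => u /andP [_ /eqP hu].
  rewrite -[X in _ <= X]mul1n; apply: leq_mul (leq_b1 _) _.
  rewrite leq_pexp2l //. have := dep_lt hu. have := dep_le u. lia.
rewrite sum_nat_const.
have hd := dep_le v.
have -> : n.+1 - dep v = (n - dep v).+1 by lia.
rewrite /= expnS ltn_mul2r expn_gt0 /=.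
apply: leq_ltn_trans (max_card _) _; by rewrite card_ord.
Qed.

Lemma Phi_connect a b : connect (impflip N) a b -> Phi a <= Phi b.
Proof.
move=> /connectP [p hp ->]; elim: p a hp => [|c p IH] a //= /andP [hac hp].
exact: leq_trans (ltnW (Phi_lt hac)) (IH _ hp).
Qed.

Lemma concept_char o i : concept N (o, i) = (o i == pref N o i).
Proof.
rewrite /concept /dom /=.
case: eqP => h.
  apply/existsP; exists o; rewrite connect0 andbT.
  apply/existsP; exists i; rewrite flipK eqxx /= pref_flip_self; exact/eqP.
apply: negbTE; apply/existsP => -[o1 /andP [h1 h2]].
have l1 := Phi_lt h1. have l2 := Phi_connect h2.
have h3 : impflip N o (flip o i).
  apply/existsP; exists i; rewrite eqxx flip_same /=.
  by move: h; case: (o i); case: (pref N o i).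
have := Phi_lt h3. lia.
Qed.

End Theory.

Definition shift (X : Type) (q : nat) (r : option (X * nat)) :=
  omap (fun p => (p.1, p.2 + q)) r.

Lemma shift_shift X a b (r : option (X * nat)) : shift a (shift b r) = shift (b + a) r.
Proof. by case: r => [[x c]|] //=; rewrite /shift /= addnA. Qed.

Section Algo.
Variables (n : nat) (ori : outcome n -> 'I_n -> bool) (A : Type)
  (interp : A -> option bool).

Definition sw i (w : outcome n) : swap n := if ori w i then (w, i) else (flip w i, i).
Definition Jn (i : 'I_n) := [seq j <- enum 'I_n | j != i].
Definition nbrs i u := [seq sw i (flip u j) | j <- Jn i].
Definition decode (p : swap n * A) : option bool :=
  omap (fun c : bool => if c then p.1.1 p.1.2 else ~~ p.1.1 p.1.2) (interp p.2).
Definition maj (r : seq (swap n * A)) :=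
  count (pred1 (Some false)) (map decode r) < count (pred1 (Some true)) (map decode r).

Fixpoint askall (xs : seq (swap n)) (k : seq (swap n * A) -> alg n A) : alg n A :=
  match xs with
  | [::] => k [::]
  | x :: xs' => Ask x (fun a => askall xs' (fun r => k ((x, a) :: r)))
  end.

Definition u0 : outcome n := [ffun _ => false].
Definition u1 i : outcome n := [ffun j => j != i].
Definition ut i t : outcome n := [ffun j : 'I_n => (j != i) && odd (j %/ 2 ^ t)].

Fixpoint askbits i m (k : (nat -> bool) -> alg n A) : alg n A :=
  match m with
  | 0 => k (fun _ => false)
  | m'.+1 => askall (nbrs i (ut i m'))
      (fun r => askbits i m' (fun f => k (fun t => if t == m' then maj r else f t)))
  end.

Definition findp i b0 (f : nat -> bool) : option 'I_n :=
  [pick j : 'I_n | (j != i) &&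
     [forall t : 'I_(up_log 2 n), odd (j %/ 2 ^ t) == (f t != b0)]].

Definition res := (option 'I_n * bool * bool)%type.

Definition learn_var i (k : res -> alg n A) : alg n A :=
  askall (nbrs i u0) (fun r0 => askall (nbrs i (u1 i)) (fun r1 =>
    let b0 := maj r0 in let b1 := maj r1 in
    if b0 == b1 then k (None, b0, b0)
    else askbits i (up_log 2 n) (fun f => k (findp i b0 f, b0, b1)))).

Fixpoint learn_loop (vs : seq 'I_n) (k : ('I_n -> res) -> alg n A) : alg n A :=
  match vs with
  | [::] => k (fun _ => (None, false, false))
  | i :: vs' => learn_var i (fun r =>
       learn_loop vs' (fun f => k (fun j => if j == i then r else f j)))
  end.

Definition mk (f : 'I_n -> res) : cpnet n :=
  CPNet (fun j => (f j).1.1) (fun j b => if b then (f j).2 else (f j).1.2).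

Definition main_alg := learn_loop (enum 'I_n) (fun f => @Ret n A (mk f)).

Hypothesis hori : orientation_ok ori.
Variable orc : swap n -> A.

Lemma sw_in i w : in_Xswap ori (sw i w).
Proof. by rewrite /sw /in_Xswap; case: ifP => //= h; rewrite hori h. Qed.

Lemma nbrs_in i u : all (in_Xswap ori) (nbrs i u).
Proof. by apply/allP => x /mapP [j _ ->]; apply: sw_in. Qed.

Lemma size_Jn i : size (Jn i) = n.-1.
Proof.
by rewrite /Jn size_filter cntE -[n in RHS]card_ord -(cardC1 i).
Qed.

Lemma size_nbrs i u : size (nbrs i u) = n.-1.
Proof. by rewrite size_map size_Jn. Qed.

Lemma run_askall xs k : all (in_Xswap ori) xs ->
  run ori (askall xs k) orc = shift (size xs) (run ori (k [seq (x, orc x) | x <- xs]) orc).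
Proof.
elim: xs k => [|x xs IH] k /=.
  by case: (run ori (k [::]) orc) => [[h q]|] //; rewrite /shift /= addn0.
move=> /andP [hx hxs]; rewrite hx IH //.
by case: (run ori _ orc) => [[h q]|] //; rewrite /shift /= addnS.
Qed.

End Algo.

Lemma bits_eq m a b : a < 2 ^ m -> b < 2 ^ m ->
  (forall t, t < m -> odd (a %/ 2 ^ t) = odd (b %/ 2 ^ t)) -> a = b.
Proof.
elim: m a b => [|m IH] a b.
  by rewrite expn0; case: a => //; case: b.
move=> ha hb h.
have h0 := h 0 isT; rewrite expn0 !divn1 in h0.
have e : a %/ 2 = b %/ 2.
  apply: IH; first by rewrite ltn_divLR // -expnSr.
    by rewrite ltn_divLR // -expnSr.
  move=> t ht; rewrite -!divnMA -expnS; exact: h.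
by rewrite (divn_eq a 2) (divn_eq b 2) e !modn2 h0.
Qed.

Section Correct.
Variables (n : nat) (ori : outcome n -> 'I_n -> bool) (A : Type)
  (interp : A -> option bool).
Hypothesis hori : orientation_ok ori.
Variable orc : swap n -> A.
Variable N : cpnet n.
Hypothesis hN : tree_cpnet N.
Hypothesis Hrob : forall i u,
  maj interp [seq (x, orc x) | x <- nbrs ori i u] = pref N u i.

Lemma run_askbits i m k : exists f, (forall t, t < m -> f t = pref N (ut i t) i) /\
  run ori (askbits ori interp i m k) orc = shift (m * n.-1) (run ori (k f) orc).
Proof.
elim: m k => [|m IH] k /=.
  exists (fun _ => false); split => //.
  by case: (run ori _ orc) => [[h q]|] //; rewrite /shift /= addn0.
rewrite run_askall ?nbrs_in //.
have [f [hf ->]] := IH (fun f => k (fun t => if t == m then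
     maj interp [seq (x, orc x) | x <- nbrs ori i (ut i m)] else f t)).
eexists; split; last first.
  by rewrite shift_shift size_nbrs mulSn addnC.
move=> t ht /=; have [->|ne] := eqVneq t m; first exact: Hrob.
apply: hf; move: ht ne; rewrite ltnS leq_eqVlt => /orP [/eqP -> //|//].
by rewrite eqxx.
Qed.

Definition agrees (r : res n) i :=
  [/\ r.1.1 = pa N i, r.1.2 = cpt N i false & (pa N i != None -> r.2 = cpt N i true)].

Definition cost i := n.-1 + n.-1 + (if pa N i is Some _ then up_log 2 n * n.-1 else 0).

Lemma run_learn_var i k : exists r, agrees r i /\
  run ori (learn_var ori interp i k) orc = shift (cost i) (run ori (k r) orc).
Proof.
rewrite /learn_var run_askall ?nbrs_in // run_askall ?nbrs_in // !Hrob.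
have e0 : pref N (u0 n) i = cpt N i false.
  by rewrite /pref; case: (pa N i) => [p|] //; rewrite ffunE.
rewrite e0 shift_shift !size_nbrs /cost.
case hp: (pa N i) => [p|]; last first.
  have -> : pref N (u1 i) i = cpt N i false by rewrite /pref hp.
  rewrite eqxx; exists (None, cpt N i false, cpt N i false); split => //.
  by rewrite /agrees hp; split.
  by rewrite addn0.
have pi : p != i.
  by apply/eqP => e; have := pa_neq hN i; rewrite hp e eqxx.
have e1 : pref N (u1 i) i = cpt N i true by rewrite /pref hp ffunE pi.
have [_ hnd] := hN.
have hd := hnd i p hp.
rewrite e1 (negbTE hd).
have [f [hf ->]] := run_askbits i (up_log 2 n) (fun f => k (findp i (cpt N i false) f, cpt N i false, cpt N i true)).
exists (findp i (cpt N i false) f, cpt N i false, cpt N i true).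
split; last by rewrite shift_shift addnC.
rewrite /agrees hp /=; split => //.
have hbit : forall t, t < up_log 2 n -> (f t != cpt N i false) = odd (p %/ 2 ^ t).
  move=> t ht; rewrite hf // /pref hp ffunE pi /=.
  case: (odd _) => /=; last by rewrite eqxx.
  by rewrite eq_sym.
have hpow : n <= 2 ^ up_log 2 n by apply: up_logP.
rewrite /findp; case: pickP => [j /andP [ji /forallP hj]|].
  congr Some; apply: val_inj; apply: (@bits_eq (up_log 2 n)).
  - exact: leq_trans (ltn_ord j) hpow.
  - exact: leq_trans (ltn_ord p) hpow.
  move=> t ht; have := hj (Ordinal ht) => /= /eqP ->; exact: hbit.
move=> /(_ p); rewrite pi /=; move/negP; case; apply/forallP => t.
by rewrite hbit.
Qed.



Lemma run_loop vs k : exists f, (forall j, j \in vs -> agrees (f j) j) /\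
  run ori (learn_loop ori interp vs k) orc =
  shift (\sum_(i <- vs) cost i) (run ori (k f) orc).
Proof.
elim: vs k => [|i vs IH] k /=.
  exists (fun _ => (None, false, false)); split => //.
  by rewrite big_nil; case: (run ori _ orc) => [[h q]|] //; rewrite /shift /= addn0.
have [r [hr ->]] := run_learn_var i (fun r => learn_loop ori interp vs
   (fun f => k (fun j => if j == i then r else f j))).
have [f [hf ->]] := IH (fun f => k (fun j => if j == i then r else f j)).
exists (fun j => if j == i then r else f j); split.
  move=> j; rewrite inE; have [-> //|ne] := eqVneq j i.
  by move=> /= h; apply: hf.
by rewrite shift_shift big_cons addnC.
Qed.

Lemma mk_ok f : (forall j, agrees (f j) j) ->
  tree_cpnet (mk f) /\ (forall o j, pref (mk f) o j = pref N o j).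
Proof.
move=> hf.
have hpa : forall j, pa (mk f) j = pa N j by move=> j; case: (hf j).
have hpr : forall o j, pref (mk f) o j = pref N o j.
  move=> o j; rewrite /pref hpa; case: (hf j) => _ h2 h3.
  case hp: (pa N j) => [p|] /=; last by rewrite h2.
  by case: (o p); [rewrite h3 ?hp | rewrite h2].
split => //.
have hrel : par_rel (mk f) =2 par_rel N by move=> a b; rewrite /par_rel hpa.
case: hN => h1 h2; split.
  by move=> i j; rewrite hrel (eq_connect hrel); apply: h1.
move=> i p; rewrite hpa => hp.
case: (hf i) => _ e2 e3; rewrite /= e2 e3 ?hp //; exact: h2 hp.
Qed.

Lemma concept_eq (h : cpnet n) : (forall o j, pref h o j = pref N o j) ->
  forall x, concept h x = concept N x.
Proof.
move=> hp x.
have hi : impflip h =2 impflip N.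
  by move=> a b; rewrite /impflip; apply: eq_existsb => i; rewrite hp.
rewrite /concept /dom; apply: eq_existsb => o1; by rewrite hi (eq_connect hi).
Qed.

Lemma main_learns : learns ori (main_alg ori interp) orc N
   (\sum_(i <- enum 'I_n) cost i).
Proof.
have [f [hf e]] := run_loop (enum 'I_n) (fun f => @Ret n A (mk f)).
have [ht hp] := mk_ok (fun j => hf j (mem_enum _ j)).
exists (mk f), (\sum_(i <- enum 'I_n) cost i); split.
  by rewrite /main_alg e /shift /= add0n.
split => //; split => //.
by move=> x _; apply: concept_eq.
Qed.

Lemma cost_bound : \sum_(i <- enum 'I_n) cost i <= 2 * (n ^ 2 + nedges N * n * up_log 2 n).
Proof.
rewrite big_enum /=.
apply: (@leq_trans (\sum_(i in 'I_n) (2 * n + (pa N i != None) * (up_log 2 n * n)))).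
  apply: leq_sum => i _; rewrite /cost.
  apply: leq_add; first by lia.
  case: (pa N i) => //= _; rewrite mul1n leq_mul2l; apply/orP; right; lia.
rewrite big_split /= sum_nat_const card_ord.
rewrite -big_distrl /=.
have -> : \sum_(i in 'I_n) (pa N i != None) = nedges N.
  rewrite /nedges -sum1_card [RHS]big_mkcond /=; apply: eq_bigr => i _.
  by rewrite inE; case: (pa N i).
have : n * (2 * n) = 2 * n ^ 2 by lia.
move=> ->; rewrite mulnDr leq_add2l; lia.
Qed.

End Correct.

Lemma maj_spec (T : Type) (s : seq T) (vote : T -> option bool) b :
  count (fun j => vote j == Some (~~ b)) s < count (fun j => vote j == Some b) s ->
  (count (fun j => vote j == Some false) s < count (fun j => vote j == Some true) s) = b.
Proof. by case: b => //= h; rewrite ltnNge (ltnW h). Qed.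

Section Robust.
Variables (n : nat) (ori : outcome n -> 'I_n -> bool).
Hypothesis hori : orientation_ok ori.
Variable N : cpnet n.
Hypothesis hN : tree_cpnet N.
Variable L : {set swap n}.

Lemma sw2 i w : (sw ori i w).2 = i.
Proof. by rewrite /sw; case: ifP. Qed.

Lemma sw1 i w k : k != i -> (sw ori i w).1 k = w k.
Proof. by rewrite /sw; case: ifP => //= _ h; rewrite flip_other. Qed.

Lemma honest i w (b : bool) : b = concept N (sw ori i w) ->
  (if b then (sw ori i w).1 (sw ori i w).2 else ~~ (sw ori i w).1 (sw ori i w).2) = pref N w i.
Proof.
move=> ->; rewrite sw2.
have -> : concept N (sw ori i w) = concept N ((sw ori i w).1, i).
  by rewrite /sw; case: ifP.
rewrite concept_char //.
have -> : pref N (sw ori i w).1 i = pref N w i.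
  by rewrite /sw; case: ifP => //= _; rewrite pref_flip_self.
by case: (_ i); case: (pref N w i).
Qed.

Lemma hits i u :
  #|[pred j | (sw ori i (flip u j) \in L) && (j != i)]| <= #|F1 ori (sw ori i u) :&: L|.
Proof.
set D := [pred j | _].
have inj : {in D &, injective (fun j => sw ori i (flip u j))}.
  move=> j k; rewrite !inE => /andP [_ hj] /andP [_ hk] e.
  apply/eqP; apply/negP => /negP hjk.
  have := congr1 (fun s : swap n => s.1 j) e => /=.
  rewrite !sw1 // flip_same flip_other //; by case: (u j).
rewrite -(card_in_imset inj); apply: subset_leq_card; apply/subsetP => y.
move=> /imsetP [j]; rewrite inE => /andP [hL hji] ->.
rewrite inE hL andbT inE sw_in //= !sw2 eqxx /=.
apply/eqP; apply: (@eq_card1 _ j) => k; rewrite !inE.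
have [->|hki] := eqVneq k i; first by rewrite /= ?eqxx /= eq_sym (negbTE hji).
rewrite /= !sw1 //; have [->|hkj] := eqVneq k j; first by rewrite flip_same; case: (u j).
by rewrite flip_other // eqxx.
Qed.

Lemma cnt_pa i : count (fun j => pa N i == Some j) (Jn i) <= 1.
Proof.
apply: leq_trans (leq_count_subseq _ (filter_subseq _ _)) _.
rewrite cntE; case: (pa N i) => [p|].
  rewrite (@eq_card _ _ (pred1 p)) ?card1 // => j; rewrite !inE.
  by apply/eqP/eqP => [[]|->].
by rewrite eq_card0.
Qed.

Lemma cnt_bad i u : count (fun j => (pa N i == Some j) || (sw ori i (flip u j) \in L)) (Jn i)
   <= 1 + #|F1 ori (sw ori i u) :&: L|.
Proof.
apply: leq_trans (_ : count (fun j => pa N i == Some j) (Jn i) +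
                      count (fun j => sw ori i (flip u j) \in L) (Jn i) <= _).
  by rewrite -count_predUI leq_addr.
apply: leq_add; first exact: cnt_pa.
by rewrite /Jn count_filter cntE; apply: hits.
Qed.

Lemma cnt_good i u (P : pred 'I_n) :
  (forall j, ~~ ((pa N i == Some j) || (sw ori i (flip u j) \in L)) -> P j) ->
  n.-1 - (1 + #|F1 ori (sw ori i u) :&: L|) <= count P (Jn i).
Proof.
move=> hP.
apply: leq_trans (_ : count (predC (fun j => (pa N i == Some j) || (sw ori i (flip u j) \in L))) (Jn i) <= _).
  rewrite -(size_Jn i) -(count_predC (fun j => (pa N i == Some j) || (sw ori i (flip u j) \in L)) (Jn i)).
  have := cnt_bad i u; lia.
by apply: sub_count => j /= h; apply: hP.
Qed.

Lemma rob_lim (n4 : 4 < n)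
  (hL : forall x, in_Xswap ori x -> #|F1 ori x :&: L| <= n - 4) i u :
  maj id [seq (x, limited_oracle N L x) | x <- nbrs ori i u] = pref N u i.
Proof.
rewrite /maj /nbrs -!map_comp !count_map.
apply: maj_spec => /=.
have hb := hL _ (sw_in hori i u).
set v := pref N u i.
have hv : forall j, pa N i != Some j -> pref N (flip u j) i = v.
  by move=> j hj; rewrite pref_flip.
apply: (@leq_ltn_trans 1).
  apply: leq_trans (cnt_pa i); apply: sub_count => j /=.
  rewrite /limited_oracle /decode; case: (_ \in L) => //=.
  rewrite (honest (erefl _)).
  apply: contraLR => /hv ->; rewrite /v; by case: (pref N u i).
apply: (leq_trans _ (cnt_good (u := u) _)); first lia.
move=> j; rewrite negb_or => /andP [hj hl].
rewrite /limited_oracle /decode (negbTE hl) /= (honest (erefl _)) hv //.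
Qed.

Lemma rob_mal (n4 : 4 < n)
  (hL : forall x, in_Xswap ori x -> #|F1 ori x :&: L| <= (n - 1) %/ 2 - 2) i u :
  maj Some [seq (x, malicious_oracle N L x) | x <- nbrs ori i u] = pref N u i.
Proof.
rewrite /maj /nbrs -!map_comp !count_map.
apply: maj_spec => /=.
have hb := hL _ (sw_in hori i u).
set v := pref N u i.
have hv : forall j, pa N i != Some j -> pref N (flip u j) i = v.
  by move=> j hj; rewrite pref_flip.
have hg := cnt_good (i := i) (u := u) (P := fun j => decode Some
    (sw ori i (flip u j), malicious_oracle N L (sw ori i (flip u j))) == Some v).
apply: (@leq_ltn_trans (count (fun j => (pa N i == Some j) || (sw ori i (flip u j) \in L)) (Jn i))).
  apply: sub_count => j /=; apply: contraLR; rewrite negb_or => /andP [hj hl].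
  rewrite /malicious_oracle /decode (negbTE hl) /= (honest (erefl _)) hv //.
  rewrite /v; by case: (pref N u i).
apply: (leq_trans _ (hg _)).
  have := cnt_bad i u. lia.
move=> j; rewrite negb_or => /andP [hj hl].
rewrite /malicious_oracle /decode (negbTE hl) /= (honest (erefl _)) hv //.
Qed.

End Robust.

Lemma learns_mono n A ori (a : alg n A) orc N b1 b2 :
  learns ori a orc N b1 -> b1 <= b2 -> learns ori a orc N b2.
Proof.
move=> [h [q [e [t [c l]]]]] hb; exists h, q; split => //; split => //; split => //.
exact: leq_trans hb.
Qed.

Theorem corollary4 :
  exists C : nat, forall n : nat, 4 < n ->
  forall ori : outcome n -> 'I_n -> bool, orientation_ok ori ->
  (exists a : alg n (option bool),
     forall (N : cpnet n) (L : {set swap n}),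
       tree_cpnet N ->
       {subset L <= in_Xswap ori} ->
       (forall x, in_Xswap ori x -> #|F1 ori x :&: L| <= n - 4) ->
       learns ori a (limited_oracle N L) N
         (C * (n ^ 2 + nedges N * n * up_log 2 n)))
  /\
  (exists a : alg n bool,
     forall (N : cpnet n) (L : {set swap n}),
       tree_cpnet N ->
       {subset L <= in_Xswap ori} ->
       (forall x, in_Xswap ori x -> #|F1 ori x :&: L| <= (n - 1) %/ 2 - 2) ->
       learns ori a (malicious_oracle N L) N
         (C * (n ^ 2 + nedges N * n * up_log 2 n))).
Proof.
exists 2 => n n4 ori hori; split.
  exists (main_alg ori (fun x : option bool => x)) => N L hN _ hL.
  apply: learns_mono (cost_bound N).
  exact: (@main_learns n ori _ (fun x => x) hori (limited_oracle N L) N hN (rob_lim hori hN n4 hL)).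
exists (main_alg ori (@Some bool)) => N L hN _ hL.
apply: learns_mono (cost_bound N).
exact: (@main_learns n ori _ Some hori (malicious_oracle N L) N hN (rob_mal hori hN n4 hL)).
Qed.
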